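(* Let $k$ be a positive integer. For all $A,B\in R_k$ we have $\operatorname{T}_k(AB)=\operatorname{T}_k(BA)$ in $\mathbb{Z}/k\mathbb{Z}$.
   Context: $\mathbb{N}=\{1,2,3,\dots\}$. $R$ denotes the ring of all $\mathbb{N}\times\mathbb{N}$ integer matrices with only finitely many nonzero entries in each row and each column, with entrywise addition and multiplication $(AB)_{i,j}=\sum_{l\ge1}a_{i,l}b_{l,j}$. Fix a positive integer $k$. Partition $\mathbb{N}$ into consecutive blocks $J_1=\{1\}$ and, for $m\ge2$, $J_m=\{2+k(m-2),\dots,1+k(m-1)\}$. For $A\in R$, the block $A^{m,n}$ is the submatrix with rows indexed by $J_m$ and columns by $J_n$. $R_k$ is the subring of $A\in R$ such that for all but finitely many pairs $(m,n)$ with $m,n\ge2$, $A^{m,n}=cI_k$ for some integer $c$. For a finite square integer matrix $M$, $\operatorname{t}_k(M)\in\mathbb{Z}/k\mathbb{Z}$ is the residue class of the sum of its diagonal entries. For $A\in R_k$, $\operatorname{T}_k(A)=\sum_{n\ge1}\operatorname{t}_k(A^{n,n})\in\mathbb{Z}/k\mathbb{Z}$ (a finite sum, since $\operatorname{t}_k(cI_k)=0$). *)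

(* Defs.v *)
From HB Require Import structures.
From mathcomp Require Import all_boot all_order ssralg ssrnum ssrint intdiv matrix.
From mathcomp Require Import boolp classical_sets functions cardinality fsbigop.
Set Implicit Arguments. Unset Strict Implicit. Unset Printing Implicit Defensive.
Import Order.TTheory GRing.Theory Num.Theory.
Local Open Scope classical_set_scope.
Local Open Scope ring_scope.

(* An N x N integer matrix; the paper's index i >= 1 is stored at i - 1
   (0-based indexing). *)
Definition imat := nat -> nat -> int.

Definition inR (A : imat) : Prop :=
  (forall i, finite_set [set j | A i j != 0]) /\
  (forall j, finite_set [set i | A i j != 0]).

Definition mulM (A B : imat) : imat :=
  fun i j => \sum_(l \in [set: nat]) A i l * B l j.

(* Blocks (numbered from 1 as in the paper): J_1 = {1}, and for m >= 2,
   J_m = {2+k(m-2), ..., 1+k(m-1)}.  In 0-based indexing J_m starts at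
   bstart k m and has bsize k m elements. *)
Definition bstart (k m : nat) : nat := if (m <= 1)%N then 0%N else (1 + k * (m - 2))%N.
Definition bsize (k m : nat) : nat := if (m <= 1)%N then 1%N else k.

Definition blockM (k : nat) (A : imat) (m n : nat) : 'M[int]_(bsize k m, bsize k n) :=
  \matrix_(r < bsize k m, s < bsize k n) A (bstart k m + r)%N (bstart k n + s)%N.

Definition blockK (k : nat) (A : imat) (m n : nat) : 'M[int]_k :=
  \matrix_(r < k, s < k) A (bstart k m + r)%N (bstart k n + s)%N.

Definition inRk (k : nat) (A : imat) : Prop :=
  inR A /\
  finite_set [set mn : nat * nat | (2 <= mn.1)%N /\ (2 <= mn.2)%N /\
                 ~ (exists c : int, blockK k A mn.1 mn.2 = c%:M)].

(* t_k(M): residue class mod k of the trace, represented by its canonical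
   representative in [0, k). *)
Definition tk (k : nat) (p : nat) (M : 'M[int]_p) : int := ((\tr M) %% k)%Z.

Definition Tk (k : nat) (A : imat) : int :=
  ((\sum_(n \in [set n : nat | (1 <= n)%N]) tk k (blockM k A n n)) %% k)%Z.

(* Main.v *)
Require Import Defs.
From HB Require Import structures.
From mathcomp Require Import zify.
From mathcomp Require Import all_boot all_order ssralg ssrnum ssrint intdiv matrix.
From mathcomp Require Import boolp classical_sets functions cardinality fsbigop.
Set Implicit Arguments. Unset Strict Implicit. Unset Printing Implicit Defensive.
Import Order.TTheory GRing.Theory Num.Theory.
Local Open Scope classical_set_scope.
Local Open Scope ring_scope.

Lemma finite_bound (T : choiceType) (S : set T) (f : T -> nat) :
  finite_set S -> exists L, forall x, S x -> (f x < L)%N.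
Proof.
move=> /finite_fsetP [X ->]; exists (\max_(x <- finmap.enum_fset X) f x).+1 => x /= xX.
by rewrite ltnS; apply: (leq_bigmax_seq (P := xpredT)).
Qed.

Lemma fs_to_iota (P : set nat) (f : nat -> int) a b :
  (forall i, P i -> f i != 0 -> (a <= i < b)%N) ->
  (forall i, (a <= i < b)%N -> P i) ->
  \sum_(i \in P) f i = \sum_(a <= i < b) f i.
Proof.
move=> H1 H2; rewrite fsbig_supp.
rewrite /index_iota; apply: fsbig_fwiden; last first.
- move=> i [/= + H]; rewrite mem_iota => Hi.
  have Pi : P i by apply: H2; move: Hi; case/andP=> ? ?; apply/andP; split; lia.
  apply: contra_notP H => fi. split => //.
- exact: iota_uniq.
- move=> i [Pi /= fi]; rewrite mem_iota; have := H1 i Pi (introN eqP fi); lia.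
Qed.

Lemma bstartS k m : (1 <= m)%N -> bstart k m.+1 = (bstart k m + bsize k m)%N.
Proof.
rewrite /bstart /bsize; case: m => // m _.
case: m => [|m] /=; first by rewrite muln0.
rewrite !subSS subn0; lia.
Qed.

Lemma bstart_ge k m : (0 < k)%N -> (m.-1 <= bstart k m)%N.
Proof. rewrite /bstart; case: ifP => H; first lia. move=> hk; nia. Qed.

Lemma bsizeK k m : (2 <= m)%N -> bsize k m = k.
Proof. by rewrite /bsize; case: ifP => //; lia. Qed.

Lemma bstart2 k m : (2 <= m)%N -> bstart k m = (1 + k * (m - 2))%N.
Proof. by rewrite /bstart; case: ifP => //; lia. Qed.

Lemma block_split k (h : nat -> int) M : (1 <= M)%N ->
  \sum_(0 <= l < bstart k M) h l =
  \sum_(1 <= m < M) \sum_(0 <= s < bsize k m) h (bstart k m + s)%N.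
Proof.
elim: M => [|M IH] // _; case: M IH => [|M] IH.
  by rewrite /bstart /= !big_geq.
rewrite bstartS // big_nat_recr //= -IH //.
rewrite (big_cat_nat _ (n := bstart k M.+1)) //=; last lia.
congr (_ + _).
have := big_addn 0 (bstart k M.+1 + bsize k M.+1) (bstart k M.+1) xpredT h.
rewrite addKn => ->.
by apply: eq_big_nat => i _; rewrite addnC.
Qed.

Definition g k (X Y : imat) n m :=
  \sum_(0 <= r < bsize k n) \sum_(0 <= s < bsize k m)
     X (bstart k n + r)%N (bstart k m + s)%N * Y (bstart k m + s)%N (bstart k n + r)%N.

Lemma gswap k X Y n m : g k Y X n m = g k X Y m n.
Proof.
rewrite /g exchange_big_nat; apply: eq_big_nat => s _.
by apply: eq_big_nat => r _; rewrite mulrC.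
Qed.

Lemma trace_eq k X Y n M : (1 <= M)%N ->
  (forall r l, (r < bsize k n)%N -> (bstart k M <= l)%N -> X (bstart k n + r)%N l = 0) ->
  \tr (blockM k (mulM X Y) n n) = \sum_(1 <= m < M) g k X Y n m.
Proof.
move=> HM HX; rewrite /mxtrace.
under eq_bigr => i _ do rewrite mxE.
rewrite -(big_mkord xpredT (fun r => mulM X Y (bstart k n + r)%N (bstart k n + r)%N)).
rewrite /g exchange_big_nat.
apply: eq_big_nat => r /andP[_ Hr].
rewrite /mulM (fs_to_iota (a := 0%N) (b := bstart k M)); last by [].
  by rewrite block_split.
move=> l _; apply: contraR; rewrite -leqNgt => Hl.
by rewrite HX // mul0r.
Qed.

Lemma sum_nat0 (a b : nat) (F : nat -> int) :
  (forall i, (a <= i < b)%N -> F i = 0) -> \sum_(a <= i < b) F i = 0.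
Proof. by move=> H; rewrite big_nat_cond big1 // => i /andP[hi _]; apply: H. Qed.

Lemma g_scalar k X Y n m c d : (2 <= n)%N -> (2 <= m)%N ->
  blockK k X n m = c%:M -> blockK k Y m n = d%:M -> (k %| g k X Y n m)%Z.
Proof.
move=> Hn Hm HX HY.
have eX r s : (r < k)%N -> (s < k)%N ->
    X (bstart k n + r)%N (bstart k m + s)%N = c *+ (r == s).
  move=> hr hs; have := congr1 (fun M : 'M_k => M (Ordinal hr) (Ordinal hs)) HX.
  by rewrite !mxE.
have eY r s : (r < k)%N -> (s < k)%N ->
    Y (bstart k m + s)%N (bstart k n + r)%N = d *+ (s == r).
  move=> hr hs; have := congr1 (fun M : 'M_k => M (Ordinal hs) (Ordinal hr)) HY.
  by rewrite !mxE.
have -> : g k X Y n m = \sum_(0 <= r < k) (c * d).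
  rewrite /g !bsizeK //; apply: eq_big_nat => r /andP[_ hr].
  rewrite (big_cat_nat _ (n := r)) //=; last lia.
  rewrite sum_nat0; last first.
    move=> s /andP[_ hs]; have hs' : (s < k)%N by lia.
    rewrite eX ?eY //.
    by rewrite (_ : (r == s) = false) ?mulr0n ?mul0r //; apply/eqP; lia.
  rewrite big_ltn // sum_nat0; last first.
    move=> s /andP[hs1 hs].
    rewrite eX ?eY //.
    by rewrite (_ : (r == s) = false) ?mulr0n ?mul0r //; apply/eqP; lia.
  by rewrite eX ?eY // !eqxx !mulr1n add0r addr0.
rewrite sumr_const_nat subn0 -mulr_natr.
apply: (dvdz_mull (c * d)).
by rewrite natz dvdzz.
Qed.

Lemma row_bound k X n : (0 < k)%N -> inR X -> exists M, (1 <= M)%N /\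
  forall M', (M <= M')%N -> forall r l, (r < bsize k n)%N ->
    (bstart k M' <= l)%N -> X (bstart k n + r)%N l = 0.
Proof.
move=> hk [HR _].
have H c : exists L, forall r l, (r < c)%N -> (L <= l)%N -> X (bstart k n + r)%N l = 0.
  elim: c => [|c [L HL]]; first by exists 0%N.
  have [L' HL'] := finite_bound id (HR (bstart k n + c)%N).
  exists (maxn L L') => r l; rewrite ltnS leq_eqVlt => /orP[/eqP -> | hr] hl.
    apply/eqP; apply: contraT => /HL' /=; lia.
  by apply: HL => //; lia.
have [L HL] := H (bsize k n).
exists L.+1; split => // M' HM' r l hr hl; apply: HL => //.
have := bstart_ge M' hk; lia.
Qed.

Lemma sum_dvd (k : int) a b (F : nat -> int) :
  (forall i, (a <= i < b)%N -> (k %| F i)%Z) -> (k %| \sum_(a <= i < b) F i)%Z.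
Proof.
move=> H; rewrite big_nat_cond; apply: rpred_sum => i /andP[hi _]; exact: H.
Qed.

Lemma Tk_formula k X Y N : (0 < k)%N -> inR X -> (1 <= N)%N ->
  (forall n m, (1 <= n)%N -> (1 <= m)%N -> (N <= n)%N || (N <= m)%N ->
     (k %| g k X Y n m)%Z) ->
  Tk k (mulM X Y) = ((\sum_(1 <= n < N) \sum_(1 <= m < N) g k X Y n m) %% k)%Z.
Proof.
move=> hk HX HN Hg.
pose x n := \tr (blockM k (mulM X Y) n n).
have Hx n : (1 <= n)%N -> (k %| x n - \sum_(1 <= m < N) g k X Y n m)%Z /\
                          ((N <= n)%N -> (k %| x n)%Z).
  move=> hn; have [M [HM1 HM]] := row_bound n hk HX.
  rewrite /x (@trace_eq k X Y n (maxn M N)); last 2 first.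
  - lia.
  - by apply: HM; apply: leq_maxl.
  rewrite (big_cat_nat _ (n := N)) //=; last by apply: leq_maxr.
  have H2 : (k %| \sum_(N <= i < maxn M N) g k X Y n i)%Z.
    by apply: sum_dvd => i /andP[hi _]; apply: Hg => //; [lia | rewrite hi orbT].
  split; first by rewrite addrC addrK.
  move=> hnN; apply: rpredD => //; apply: sum_dvd => i /andP[hi _].
  by apply: Hg => //; rewrite hnN.
rewrite /Tk (fs_to_iota (a := 1%N) (b := N)); last first.
- by move=> i /andP[].
- move=> i /= hi; apply: contraR.
  rewrite hi /= -leqNgt => hiN; rewrite /tk -/(x i); apply/eqP/dvdz_mod0P.
  by case: (Hx i hi) => _; apply.
apply/eqP; rewrite eqz_mod_dvd -sumrB; apply: sum_dvd => n /andP[hn _].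
rewrite /tk -/(x n).
have -> : ((x n %% k)%Z - \sum_(1 <= m < N) g k X Y n m) =
   ((x n %% k)%Z - x n) + (x n - \sum_(1 <= m < N) g k X Y n m).
  by rewrite addrA addrNK.
apply: rpredD; last by case: (Hx n hn).
rewrite {2}(divz_eq (x n) k) opprD addrA addrC addKr rpredN.
by apply: dvdz_mull; apply: dvdzz.
Qed.

Theorem mainTheorem6 (k : nat) (hk : (0 < k)%N) (A B : imat) :
  inRk k A -> inRk k B -> Tk k (mulM A B) = Tk k (mulM B A).
Proof.
move=> [HA badA] [HB badB].
have [LA HLA] := finite_bound (fun mn : nat * nat => (mn.1 + mn.2)%N) badA.
have [LB HLB] := finite_bound (fun mn : nat * nat => (mn.1 + mn.2)%N) badB.
have [L1 HL1] := finite_bound id (HA.1 0%N).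
have [L2 HL2] := finite_bound id (HA.2 0%N).
pose N := (LA + LB + L1 + L2 + 2)%N.
have HN : (1 <= N)%N by rewrite /N; lia.
have Hg n m : (1 <= n)%N -> (1 <= m)%N -> (N <= n)%N || (N <= m)%N ->
    (k %| g k A B n m)%Z.
  move=> hn hm hNm.
  case: (ltnP 1 n) => hn2; case: (ltnP 1 m) => hm2.
  - have [[c Hc]|nc] := pselect (exists c, blockK k A n m = c%:M); last first.
      have := HLA (n, m) (conj hn2 (conj hm2 nc)) => /=; rewrite /N in hNm; lia.
    have [[d Hd]|nd] := pselect (exists d, blockK k B m n = d%:M); last first.
      have := HLB (m, n) (conj hm2 (conj hn2 nd)) => /=; rewrite /N in hNm; lia.
    exact: g_scalar Hc Hd.
  - have -> : m = 1%N by lia.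
    apply: sum_dvd => r /andP[_ hr]; apply: sum_dvd => s /andP[_ hs].
    move: hs; rewrite /bsize /bstart /= => hs.
    have hnN : (N <= n)%N by rewrite /N in hNm *; lia.
    have := bstart_ge n hk => hb.
    have -> : A (bstart k n + r)%N (0 + s)%N = 0.
      have -> : (0 + s)%N = 0%N by lia.
      apply/eqP; apply: contraT => H; have := HL2 _ H => /=.
      rewrite /N in hnN; lia.
    by rewrite mul0r.
  - have -> : n = 1%N by lia.
    apply: sum_dvd => r /andP[_ hr]; apply: sum_dvd => s /andP[_ hs].
    move: hr; rewrite /bsize /bstart /= => hr.
    have hmN : (N <= m)%N by rewrite /N in hNm *; lia.
    have := bstart_ge m hk => hb.
    have -> : A (0 + r)%N (bstart k m + s)%N = 0.
      have -> : (0 + r)%N = 0%N by lia.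
      apply/eqP; apply: contraT => H; have := HL1 _ H => /=.
      rewrite /N in hmN; lia.
    by rewrite mul0r.
  - rewrite /N in hNm; lia.
rewrite (Tk_formula hk HA HN Hg) (Tk_formula hk HB HN); last first.
  move=> n m hn hm hNm; rewrite gswap; apply: Hg => //.
  by rewrite orbC.
congr (_ %% _)%Z.
rewrite exchange_big_nat; apply: eq_big_nat => n _; apply: eq_big_nat => m _.
by rewrite gswap.
Qed.
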